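(* Let $(G,\gamma)$ and $(T,\eta)$ be unary FA-presentable directed graphs and let $g\in G$, $t\in T$. Then the directed graph obtained by attaching $(T,\eta)$ at $t$ to $g$ is unary FA-presentable.
   Context: A directed graph is a set with a binary edge relation. Attaching $(T,\eta)$ at $t$ to the vertex $g$ of $(G,\gamma)$ means taking the disjoint union of the two graphs and identifying $g$ and $t$. A structure $(X,\eta)$ is unary FA-presentable if there exist a regular language $L\subseteq a^*$ and a surjection $\phi:L\to X$ such that $\{(u,v)\in L^2:u\phi=v\phi\}$ and $\{(u,v)\in L^2:(u\phi,v\phi)\in\eta\}$ are regular relations (the words $\mathrm{conv}(u,v)$ over $\{a,\$\}^2$, reading $u,v$ in parallel with the shorter padded by $\$$, form regular languages). *)

(* Defs.v *)
From mathcomp Require Import all_boot.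
Set Implicit Arguments. Unset Strict Implicit. Unset Printing Implicit Defensive.

Definition dfa_run (A S : Type) (d : S -> A -> S) (s : S) (w : seq A) : S :=
  foldl d s w.

Definition regular (A : finType) (L : seq A -> Prop) : Prop :=
  exists (S : finType) (s0 : S) (d : S -> A -> S) (F : pred S),
    forall w, L w <-> F (dfa_run d s0 w).

(* Convolution conv(u,v): read u,v in parallel, padding the shorter with $
   (here [None]); letters of the alphabet {a,$}^2 are pairs of options. *)
Definition conv (A : Type) (u v : seq A) : seq (option A * option A) :=
  [seq (onth u i, onth v i) | i <- iota 0 (maxn (size u) (size v))].

Definition regular_rel (A : finType) (R : seq A -> seq A -> Prop) : Prop :=
  regular (fun w : seq (option A * option A) =>
             exists u v, R u v /\ w = conv u v).

(* Unary alphabet {a}: the single letter a is [tt : unit], so a^* = seq unit. *)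
Definition uword := seq unit.

Definition unary_FA_presentable (X : Type) (eta : X -> X -> Prop) : Prop :=
  exists (L : uword -> Prop) (phi : {u : uword | L u} -> X),
    regular L /\
    (forall x : X, exists u, phi u = x) /\
    regular_rel (fun u v : uword =>
       exists (hu : L u) (hv : L v), phi (exist _ u hu) = phi (exist _ v hv)) /\
    regular_rel (fun u v : uword =>
       exists (hu : L u) (hv : L v), eta (phi (exist _ u hu)) (phi (exist _ v hv))).

(* Disjoint union of G and T with t identified with g: concretely the vertex
   set G + (T \ {t}); the vertex t of T becomes the vertex [inl g]. *)
Definition attach_vertex (G T : Type) (t : T) : Type := (G + {x : T | x <> t})%type.

Definition attach_rel (G T : Type) (gamma : G -> G -> Prop) (eta : T -> T -> Prop)
    (g : G) (t : T) (a b : attach_vertex G t) : Prop :=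
  match a, b with
  | inl x, inl y => gamma x y \/ (x = g /\ y = g /\ eta t t)
  | inl x, inr y => x = g /\ eta t (proj1_sig y)
  | inr x, inl y => y = g /\ eta (proj1_sig x) t
  | inr x, inr y => eta (proj1_sig x) (proj1_sig y)
  end.

(* Main.v *)
Require Import Defs.
From mathcomp Require Import all_boot zify.
From Stdlib Require Import Classical ClassicalEpsilon ProofIrrelevance.
Set Implicit Arguments. Unset Strict Implicit. Unset Printing Implicit Defensive.

Definition SS : option unit * option unit := (Some tt, Some tt).
Definition SN : option unit * option unit := (Some tt, None).
Definition NS : option unit * option unit := (None, Some tt).

Definition cw (p q : nat) : seq (option unit * option unit) :=
  nseq (minn p q) SS ++ (if p <= q then nseq (q - p) NS else nseq (p - q) SN).

Lemma onth_iota m k i : onth (iota m k) i = if i < k then Some (m + i) else None.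
Proof.
elim: k m i => [|k IH] m [|i] //=; first by rewrite addn0.
by rewrite IH ltnS addSnnS.
Qed.

Lemma conv_N p q : conv (nseq p tt) (nseq q tt) = cw p q.
Proof.
apply: eq_from_onth => i.
rewrite /conv onth_map onth_iota !size_nseq /cw onth_cat size_nseq !onth_nseq.
rewrite /SS /SN /NS.
case: (leqP p q) => Hpq;
  repeat (case: ifP => /=; rewrite ?onth_nseq ?add0n); try (move=> *; lia); try done.
Qed.

Lemma cw_inj p q p' q' : cw p q = cw p' q' -> p = p' /\ q = q'.
Proof.
move=> E.
have c1 : forall a b, count (fun x : option unit * option unit => x.1 != None) (cw a b) = a.
  move=> a b; rewrite /cw count_cat !count_nseq; case: ifP; rewrite count_nseq /=; lia.
have c2 : forall a b, count (fun x : option unit * option unit => x.2 != None) (cw a b) = b.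
  move=> a b; rewrite /cw count_cat !count_nseq; case: ifP; rewrite count_nseq /=; lia.
by split; [rewrite -(c1 p q) -(c1 p' q') E | rewrite -(c2 p q) -(c2 p' q') E].
Qed.

Lemma unit_seq (w : seq unit) : w = nseq (size w) tt.
Proof. by elim: w => [|[] w IH] //=; rewrite -IH. Qed.

Lemma foldl_nseq (S A : Type) (d : S -> A -> S) (a : A) n s :
  foldl d s (nseq n a) = iter n (fun s => d s a) s.
Proof. elim: n s => [|n IH] s //; by rewrite [LHS]/= IH iterSr. Qed.

Definition nrun (S : Type) (s0 : S) (A B C : S -> S) p q :=
  if p <= q then iter (q - p) C (iter p A s0) else iter (p - q) B (iter q A s0).

Definition natreg (P : nat -> nat -> Prop) : Prop :=
  exists (S : finType) (s0 : S) (A B C : S -> S) (F : pred S),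
    forall p q, P p q <-> F (nrun s0 A B C p q).

Definition unreg (U : nat -> Prop) : Prop :=
  exists (S : finType) (s0 : S) (f : S -> S) (F : pred S),
    forall n, U n <-> F (iter n f s0).

Lemma regular_unreg (L : uword -> Prop) : regular L -> unreg (fun n => L (nseq n tt)).
Proof.
move=> [S [s0 [d [F H]]]]; exists S, s0, (fun s => d s tt), F => n.
by rewrite H /dfa_run foldl_nseq.
Qed.

Lemma unreg_regular (L : uword -> Prop) : unreg (fun n => L (nseq n tt)) -> regular L.
Proof.
move=> [S [s0 [f [F H]]]]; exists S, s0, (fun s _ => f s), F => w.
by rewrite {1}(unit_seq w) H /dfa_run {2}(unit_seq w) foldl_nseq.
Qed.

Lemma regrel_natreg (R : uword -> uword -> Prop) :
  regular_rel R -> natreg (fun p q => R (nseq p tt) (nseq q tt)).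
Proof.
move=> [S [s0 [d [F H]]]].
exists S, s0, (fun s => d s SS), (fun s => d s SN), (fun s => d s NS), F => p q.
have E : dfa_run d s0 (cw p q) = nrun s0 (fun s => d s SS) (fun s => d s SN) (fun s => d s NS) p q.
  rewrite /dfa_run /cw /nrun foldl_cat foldl_nseq.
  case: (leqP p q) => Hpq; rewrite foldl_nseq.
  - by [].
  - by [].
rewrite -E -(H (cw p q)); split.
- by move=> HR; exists (nseq p tt), (nseq q tt); rewrite conv_N.
- move=> [u [v [HR Ew]]].
  move: Ew; rewrite (unit_seq u) (unit_seq v) conv_N => /cw_inj [-> ->].
  by rewrite -!unit_seq.
Qed.

Section NR.
Variables (S : finType) (s0 : S) (A B C : S -> S).
Definition phase p q : option (option bool) := if p == q then Some None else Some (Some (q < p)).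
Definition dd (z : S * option (option bool)) (x : option unit * option unit) :
   S * option (option bool) :=
  match z.2, x.1, x.2 with
  | Some None, Some _, Some _ => (A z.1, Some None)
  | Some None, Some _, None => (B z.1, Some (Some true))
  | Some (Some true), Some _, None => (B z.1, Some (Some true))
  | Some None, None, Some _ => (C z.1, Some (Some false))
  | Some (Some false), None, Some _ => (C z.1, Some (Some false))
  | _, _, _ => (z.1, None)
  end.

Lemma dd_cw p q : foldl dd (s0, Some None) (cw p q) = (nrun s0 A B C p q, phase p q).
Proof.
rewrite /cw foldl_cat foldl_nseq.
have HA : forall n s, iter n (fun z => dd z SS) (s, Some None) = (iter n A s, Some None).
  by elim=> [|n IH] s //=; rewrite IH.
rewrite HA /nrun /phase.
case: (leqP p q) => Hpq; rewrite foldl_nseq.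
- have HC : forall n s, iter n (fun z => dd z NS) (s, Some None) =
      (iter n C s, if n == 0 then Some None else Some (Some false)).
    elim=> [|n IH] s //=; rewrite IH; by case: (n == 0).
  rewrite HC; congr pair; case: eqP; case: eqP; move=> H1 H2; (done || lia).
- have HB : forall n s, iter n (fun z => dd z SN) (s, Some None) =
      (iter n B s, if n == 0 then Some None else Some (Some true)).
    elim=> [|n IH] s //=; rewrite IH; by case: (n == 0).
  rewrite (HB (p-q) (iter q A s0)); congr pair; case: eqP; case: eqP; move=> H1 H2; (done || lia).
Qed.

Lemma dd_dead w s : foldl dd (s, None) w = (s, None).
Proof. by elim: w => [|x w IH] //=. Qed.

Lemma nseqSr (T : Type) n (x : T) : nseq n.+1 x = rcons (nseq n x) x.
Proof. by elim: n => [|n IH] //=; rewrite -IH. Qed.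

Lemma cw_rcons p q x : (foldl dd (s0, Some None) (rcons (cw p q) x)).2 != None ->
  exists p' q', rcons (cw p q) x = cw p' q'.
Proof.
rewrite foldl_rcons dd_cw /dd /phase /=.
case: x => [[[]|] [[]|]] /=; case: (eqVneq p q) => [<-|Hpq] //=; try by case: ltnP.
- move=> _; exists p.+1, p.+1; by rewrite /cw !minnn !leqnn !subnn /= !cats0 /SS -nseqSr.
- move=> _; exists p.+1, p; rewrite /cw.
  have -> : minn p.+1 p = p by lia. have -> : minn p p = p by lia.
  by rewrite leqnn ltnn subnn subSnn /= cats0 -cats1.
- case: ltnP => H //= _; exists p.+1, q; rewrite /cw.
  have -> : minn p.+1 q = q by lia. have -> : minn p q = q by lia.
  have -> : p <= q = false by lia. have -> : p.+1 <= q = false by lia.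
  by rewrite subSn ?rcons_cat ?nseqSr //; lia.
- move=> _; exists p, p.+1; rewrite /cw.
  have -> : minn p p.+1 = p by lia. have -> : minn p p = p by lia.
  by rewrite leqnn leqnSn subnn subSnn /= cats0 -cats1.
- case: ltnP => H //= _; exists p, q.+1; rewrite /cw.
  have -> : minn p q.+1 = p by lia. have -> : minn p q = p by lia.
  have -> : p <= q by lia. have -> : p <= q.+1 by lia.
  by rewrite subSn ?rcons_cat ?nseqSr //; lia.
Qed.

Lemma dd_alive w : (foldl dd (s0, Some None) w).2 != None -> exists p q, w = cw p q.
Proof.
elim/last_ind: w => [|w x IH]; first by move=> _; exists 0, 0.
move=> H.
have H' : (foldl dd (s0, Some None) w).2 != None.
  move: H; rewrite foldl_rcons.
  case E: (foldl dd (s0, Some None) w) => [s [ph|]] //=.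
move: (IH H') => [p [q Ew]]; subst w.
exact: cw_rcons.
Qed.
End NR.

Lemma natreg_regrel (R : uword -> uword -> Prop) :
  natreg (fun p q => R (nseq p tt) (nseq q tt)) -> regular_rel R.
Proof.
move=> [S [s0 [A [B [C [F H]]]]]].
exists (S * option (option bool))%type, (s0, Some None), (dd A B C), (fun z : S * option (option bool) => (z.2 != None) && F z.1) => w.
split.
- move=> [u [v [HR ->]]].
  rewrite /dfa_run (unit_seq u) (unit_seq v) conv_N dd_cw /phase /=.
  apply/andP; split; first by case: (size u == size v).
  by apply/H; rewrite -!unit_seq.
- move=> /andP [Hal HF].
  move: (dd_alive Hal) => [p [q Ew]]; subst w.
  exists (nseq p tt), (nseq q tt); rewrite conv_N; split => //.
  by rewrite H; move: HF; rewrite /dfa_run dd_cw.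
Qed.

Lemma natreg_ext (P Q : nat -> nat -> Prop) :
  (forall p q, P p q <-> Q p q) -> natreg P -> natreg Q.
Proof.
move=> E [S [s0 [A [B [C [F H]]]]]]; exists S, s0, A, B, C, F => p q.
by rewrite -E.
Qed.

Lemma unreg_ext (P Q : nat -> Prop) :
  (forall p, P p <-> Q p) -> unreg P -> unreg Q.
Proof.
move=> E [S [s0 [f [F H]]]]; exists S, s0, f, F => p.
by rewrite -E.
Qed.

Lemma iter_pair (S1 S2 : Type) (f : S1 -> S1) (g : S2 -> S2) n z :
  iter n (fun z : S1 * S2 => (f z.1, g z.2)) z = (iter n f z.1, iter n g z.2).
Proof. by elim: n => [|n IH] /=; [case: z | rewrite IH]. Qed.

Lemma nrun_pair (S1 S2 : Type) (a1 : S1) (a2 : S2) A1 B1 C1 A2 B2 C2 p q :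
  nrun (a1, a2) (fun z : S1 * S2 => (A1 z.1, A2 z.2)) (fun z => (B1 z.1, B2 z.2))
     (fun z => (C1 z.1, C2 z.2)) p q = (nrun a1 A1 B1 C1 p q, nrun a2 A2 B2 C2 p q).
Proof. by rewrite /nrun; case: ifP => _; rewrite !iter_pair. Qed.

Lemma natreg_and (P Q : nat -> nat -> Prop) :
  natreg P -> natreg Q -> natreg (fun p q => P p q /\ Q p q).
Proof.
move=> [S1 [a1 [A1 [B1 [C1 [F1 H1]]]]]] [S2 [a2 [A2 [B2 [C2 [F2 H2]]]]]].
exists (S1 * S2)%type, (a1, a2), (fun z => (A1 z.1, A2 z.2)), (fun z => (B1 z.1, B2 z.2)),
  (fun z => (C1 z.1, C2 z.2)), (fun z : S1 * S2 => F1 z.1 && F2 z.2) => p q.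
rewrite nrun_pair H1 H2 /=; split; first by move=> [-> ->].
by move/andP.
Qed.

Lemma natreg_or (P Q : nat -> nat -> Prop) :
  natreg P -> natreg Q -> natreg (fun p q => P p q \/ Q p q).
Proof.
move=> [S1 [a1 [A1 [B1 [C1 [F1 H1]]]]]] [S2 [a2 [A2 [B2 [C2 [F2 H2]]]]]].
exists (S1 * S2)%type, (a1, a2), (fun z => (A1 z.1, A2 z.2)), (fun z => (B1 z.1, B2 z.2)),
  (fun z => (C1 z.1, C2 z.2)), (fun z : S1 * S2 => F1 z.1 || F2 z.2) => p q.
rewrite nrun_pair H1 H2 /=; split; first by move=> [->|->] //; rewrite orbT.
by move/orP.
Qed.

Lemma natreg_const (Q : Prop) : natreg (fun _ _ => Q).
Proof.
case: (classic Q) => HQ.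
- exists unit, tt, id, id, id, (fun _ => true) => p q; by split.
- exists unit, tt, id, id, id, (fun _ => false) => p q; by split.
Qed.

Lemma natreg_swap (P : nat -> nat -> Prop) : natreg P -> natreg (fun p q => P q p).
Proof.
move=> [S [s0 [A [B [C [F H]]]]]]; exists S, s0, A, C, B, F => p q.
rewrite H /nrun.
case: (ltngtP p q) => Hpq //.
by subst q; rewrite subnn.
Qed.

Lemma iter_id (T : Type) n (x : T) : iter n id x = x.
Proof. by elim: n => //= n ->. Qed.

Lemma natreg_fst (U : nat -> Prop) : unreg U -> natreg (fun p q => U p).
Proof.
move=> [S [s0 [f [F H]]]]; exists S, s0, f, f, id, F => p q.
rewrite H /nrun; case: leqP => Hpq; first by rewrite iter_id.
by rewrite -iterD subnK //; lia.
Qed.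

Lemma natreg_snd (U : nat -> Prop) : unreg U -> natreg (fun p q => U q).
Proof. by move=> H; apply: (natreg_swap (natreg_fst H)). Qed.

Lemma natreg_section (P : nat -> nat -> Prop) c : natreg P -> unreg (fun p => P p c).
Proof.
move=> [S [s0 [A [B [C [F H]]]]]].
pose f := fun z : S * 'I_c.+1 => if z.2 < c then (A z.1, inord z.2.+1 : 'I_c.+1) else (B z.1, z.2).
pose F' := fun z : S * 'I_c.+1 => if z.2 < c then F (iter (c - z.2) C z.1) else F z.1.
have E : forall p, iter p f (s0, ord0) =
   if p <= c then (iter p A s0, inord p) else (iter (p - c) B (iter c A s0), inord c).
  elim=> [|p IH]; first by congr pair; apply: val_inj; rewrite /= inordK.
  rewrite iterS IH.
  case: (ltngtP p c) => Hpc.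
  - rewrite /f /= inordK; last by lia. by rewrite Hpc.
  - rewrite /f /= inordK; last by lia. rewrite ltnn subSn; last by lia. by [].
  - subst p; rewrite /f /= inordK // ltnn subSnn. by [].
exists (S * 'I_c.+1)%type, (s0, ord0), f, F' => p.
rewrite H E /F' /nrun.
case: (ltngtP p c) => Hpc /=.
- rewrite inordK; last by lia. by rewrite Hpc.
- by rewrite inordK // ltnn.
- by subst p; rewrite inordK // ltnn subnn.
Qed.

Lemma halfS n : n.+1./2 = odd n + n./2.
Proof. by rewrite -uphalf_half. Qed.

Lemma natreg_half (P : nat -> nat -> Prop) e1 e2 :
  natreg P -> natreg (fun p q => odd p = e1 /\ odd q = e2 /\ P p./2 q./2).
Proof.
move=> [S [s0 [A [B [C [F H]]]]]].
pose A' := fun z : S * bool * bool => (if z.1.2 then A z.1.1 else z.1.1, ~~ z.1.2, ~~ z.2).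
pose B' := fun z : S * bool * bool => (if z.1.2 then B z.1.1 else z.1.1, ~~ z.1.2, z.2).
pose C' := fun z : S * bool * bool => (if z.2 then C z.1.1 else z.1.1, z.1.2, ~~ z.2).
have HA : forall k, iter k A' (s0, false, false) = (iter k./2 A s0, odd k, odd k).
  elim=> [|k IH] //; rewrite iterS IH /A' /= ?uphalf_half ?halfS; by case: (odd k).
have HC : forall k j s pp, iter j C' (s, pp, odd k) = (iter ((k+j)./2 - k./2) C s, pp, odd (k+j)).
  move=> k; elim=> [|j IH] s pp; first by rewrite addn0 subnn.
  have Hle : k./2 <= (k + j)./2 by apply: half_leq; lia.
  rewrite iterS IH /C' addnS /= ?uphalf_half ?halfS; case: (odd (k + j)) => /=.
  - by rewrite subSn.
  - by [].
have HB : forall k j s qq, iter j B' (s, odd k, qq) = (iter ((k+j)./2 - k./2) B s, odd (k+j), qq).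
  move=> k; elim=> [|j IH] s qq; first by rewrite addn0 subnn.
  have Hle : k./2 <= (k + j)./2 by apply: half_leq; lia.
  rewrite iterS IH /B' addnS /= ?uphalf_half ?halfS; case: (odd (k + j)) => /=.
  - by rewrite subSn.
  - by [].
exists (S * bool * bool)%type, (s0, false, false), A', B', C',
  (fun z : S * bool * bool => [&& F z.1.1, z.1.2 == e1 & z.2 == e2]) => p q.
have E : nrun (s0, false, false) A' B' C' p q = (nrun s0 A B C p./2 q./2, odd p, odd q).
  rewrite /nrun; case: leqP => Hpq.
  - rewrite HA HC subnKC // half_leq //.
  - rewrite HA HB subnKC; last by lia.
    case: leqP => Hh.
    + have Hh' : q./2 <= p./2 by apply: half_leq; lia.
      have -> : p./2 = q./2 by lia.
      by rewrite !subnn.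
    + by [].
rewrite E H /=; split.
- by move=> [-> [-> ->]]; rewrite !eqxx.
- by move=> /and3P [HF /eqP -> /eqP ->].
Qed.

Definition fdef (X : Type) (L : uword -> Prop) (ph : {u | L u} -> X) (d : X) (u : uword) : X :=
  match excluded_middle_informative (L u) with
  | left h => ph (exist _ u h) | right _ => d end.

Lemma fdefE (X : Type) (L : uword -> Prop) (ph : {u | L u} -> X) d u (h : L u) :
  fdef ph d u = ph (exist _ u h).
Proof.
rewrite /fdef; case: excluded_middle_informative => [h'|//].
by rewrite (proof_irrelevance _ h h').
Qed.

Definition Fo (G T : Type) (g : G) (t : T) (x : T) : attach_vertex G t :=
  match excluded_middle_informative (x = t) with
  | left _ => inl g | right h => inr (exist _ x h) end.

Lemma Fo_t (G T : Type) (g : G) (t : T) : Fo g t t = inl g.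
Proof. by rewrite /Fo; case: excluded_middle_informative. Qed.

Lemma Fo_nt (G T : Type) (g : G) (t : T) x (h : x <> t) : Fo g t x = inr (exist _ x h).
Proof.
rewrite /Fo; case: excluded_middle_informative => // h'.
by rewrite (proof_irrelevance _ h h').
Qed.

Lemma Fo_inj (G T : Type) (g : G) (t : T) x y : Fo g t x = Fo g t y <-> x = y.
Proof.
split; last by move=> ->.
case: (excluded_middle_informative (x = t)) => [->|hx];
case: (excluded_middle_informative (y = t)) => [->|hy] //.
- by rewrite Fo_t (Fo_nt _ hy).
- by rewrite Fo_t (Fo_nt _ hx).
- by rewrite (Fo_nt _ hx) (Fo_nt _ hy) => [[]].
Qed.

Lemma Fo_inl (G T : Type) (g : G) (t : T) x a : Fo g t x = inl a <-> x = t /\ a = g.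
Proof.
split; last by move=> [-> ->]; rewrite Fo_t.
case: (excluded_middle_informative (x = t)) => [->|hx].
- by rewrite Fo_t => [[->]].
- by rewrite (Fo_nt _ hx).
Qed.

Lemma ex2E (A B X : Prop) : (exists (_ : A) (_ : B), X) <-> A /\ B /\ X.
Proof. by split; [move=> [a [b x]] | move=> [a [b x]]; exists a, b]. Qed.

Lemma four (Pee Pco Poe Poo Q : nat -> nat -> Prop) :
  (forall p q, odd p = false -> odd q = false -> (Pee p./2 q./2 <-> Q p q)) ->
  (forall p q, odd p = true -> odd q = true -> (Poo p./2 q./2 <-> Q p q)) ->
  (forall p q, odd p = false -> odd q = true -> (Pco p./2 q./2 <-> Q p q)) ->
  (forall p q, odd p = true -> odd q = false -> (Poe p./2 q./2 <-> Q p q)) ->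
  forall p q,
   ((odd p = false /\ odd q = false /\ Pee p./2 q./2) \/
    (odd p = true /\ odd q = true /\ Poo p./2 q./2)) \/
   ((odd p = false /\ odd q = true /\ Pco p./2 q./2) \/
    (odd p = true /\ odd q = false /\ Poe p./2 q./2)) <-> Q p q.
Proof.
move=> H1 H2 H3 H4 p q.
case Op: (odd p); case Oq: (odd q).
- rewrite -(H2 p q Op Oq); intuition discriminate.
- rewrite -(H4 p q Op Oq); intuition discriminate.
- rewrite -(H3 p q Op Oq); intuition discriminate.
- rewrite -(H1 p q Op Oq); intuition discriminate.
Qed.

Lemma tfE (X : Prop) : (true = false /\ X) <-> False. Proof. by split=> [[]|]. Qed.
Lemma ftE (X : Prop) : (false = true /\ X) <-> False. Proof. by split=> [[]|]. Qed.
Lemma ttE (X : Prop) : (true = true /\ X) <-> X. Proof. by split=> [[]|]. Qed.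
Lemma ffE (X : Prop) : (false = false /\ X) <-> X. Proof. by split=> [[]|]. Qed.
Lemma Fand (X : Prop) : (False /\ X) <-> False. Proof. tauto. Qed.
Lemma orF (X : Prop) : (X \/ False) <-> X. Proof. tauto. Qed.
Lemma For (X : Prop) : (False \/ X) <-> X. Proof. tauto. Qed.
Unset Implicit Arguments.

Theorem lemma6p4 (G : Type) (gamma : G -> G -> Prop)
    (T : Type) (eta : T -> T -> Prop) (g : G) (t : T) :
  unary_FA_presentable gamma ->
  unary_FA_presentable eta ->
  unary_FA_presentable (@attach_rel G T gamma eta g t).
Proof.
move=> [LG [phG [rLG [surG [eqG relG]]]]] [LT [phT [rLT [surT [eqT relT]]]]].
pose fG := fdef phG g.
pose fT := fdef phT t.
have EG : natreg (fun m n => LG (nseq m tt) /\ LG (nseq n tt) /\ fG (nseq m tt) = fG (nseq n tt)).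
  apply: natreg_ext (regrel_natreg eqG) => m n; split.
  - by move=> [hu [hv E]]; rewrite /fG (fdefE _ _ hu) (fdefE _ _ hv).
  - by move=> [hu [hv E]]; exists hu, hv; rewrite -(fdefE _ g hu) -(fdefE _ g hv).
have ET : natreg (fun m n => LT (nseq m tt) /\ LT (nseq n tt) /\ fT (nseq m tt) = fT (nseq n tt)).
  apply: natreg_ext (regrel_natreg eqT) => m n; split.
  - by move=> [hu [hv E]]; rewrite /fT (fdefE _ _ hu) (fdefE _ _ hv).
  - by move=> [hu [hv E]]; exists hu, hv; rewrite -(fdefE _ t hu) -(fdefE _ t hv).
have GG : natreg (fun m n => LG (nseq m tt) /\ LG (nseq n tt) /\ gamma (fG (nseq m tt)) (fG (nseq n tt))).
  apply: natreg_ext (regrel_natreg relG) => m n; split.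
  - by move=> [hu [hv E]]; rewrite /fG (fdefE _ _ hu) (fdefE _ _ hv).
  - by move=> [hu [hv E]]; exists hu, hv; rewrite -(fdefE _ g hu) -(fdefE _ g hv).
have GT : natreg (fun m n => LT (nseq m tt) /\ LT (nseq n tt) /\ eta (fT (nseq m tt)) (fT (nseq n tt))).
  apply: natreg_ext (regrel_natreg relT) => m n; split.
  - by move=> [hu [hv E]]; rewrite /fT (fdefE _ _ hu) (fdefE _ _ hv).
  - by move=> [hu [hv E]]; exists hu, hv; rewrite -(fdefE _ t hu) -(fdefE _ t hv).
have [cg [LGcg fGcg]] : exists c, LG (nseq c tt) /\ fG (nseq c tt) = g.
  move: (surG g) => [[u hu] Hu]; exists (size u).
  rewrite -unit_seq; split => //; by rewrite /fG (fdefE _ _ hu).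
have [ct [LTct fTct]] : exists c, LT (nseq c tt) /\ fT (nseq c tt) = t.
  move: (surT t) => [[u hu] Hu]; exists (size u).
  rewrite -unit_seq; split => //; by rewrite /fT (fdefE _ _ hu).
have Eg : unreg (fun m => LG (nseq m tt) /\ fG (nseq m tt) = g).
  apply: unreg_ext (natreg_section cg EG) => m; rewrite fGcg; tauto.
have Et : unreg (fun m => LT (nseq m tt) /\ fT (nseq m tt) = t).
  apply: unreg_ext (natreg_section ct ET) => m; rewrite fTct; tauto.
have GGc : unreg (fun m => LG (nseq m tt) /\ gamma (fG (nseq m tt)) g).
  apply: unreg_ext (natreg_section cg GG) => m; rewrite fGcg; tauto.
have GGc' : unreg (fun n => LG (nseq n tt) /\ gamma g (fG (nseq n tt))).
  apply: unreg_ext (natreg_section cg (natreg_swap GG)) => m; rewrite fGcg; tauto.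
have GTc : unreg (fun m => LT (nseq m tt) /\ eta (fT (nseq m tt)) t).
  apply: unreg_ext (natreg_section ct GT) => m; rewrite fTct; tauto.
have GTc' : unreg (fun n => LT (nseq n tt) /\ eta t (fT (nseq n tt))).
  apply: unreg_ext (natreg_section ct (natreg_swap GT)) => m; rewrite fTct; tauto.
have uLG := regular_unreg rLG.
have uLT := regular_unreg rLT.
pose Lw := fun n => if odd n then LT (nseq n./2 tt) else LG (nseq n./2 tt).
pose Fw := fun n => if odd n then Fo g t (fT (nseq n./2 tt)) else inl (fG (nseq n./2 tt)) : attach_vertex G t.
exists (fun w => Lw (size w)), (fun w => Fw (size (sval w))).
split; [|split; [|split]].
-
  apply: unreg_regular.
  apply: unreg_ext (natreg_section 0 (natreg_or (natreg_half true false (natreg_fst uLT))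
                                               (natreg_half false false (natreg_fst uLG)))) => n.
  rewrite size_nseq /Lw; case: (odd n); intuition discriminate.
-
  case=> [x | [y hy]].
  + move: (surG x) => [[u hu] Hu].
    have hw : Lw (size (nseq (size u).*2 tt)).
      by rewrite /Lw size_nseq odd_double doubleK -unit_seq.
    exists (exist (fun w => Lw (size w)) (nseq (size u).*2 tt) hw); rewrite /Fw /= size_nseq odd_double doubleK -unit_seq.
    by rewrite /fG (fdefE _ _ hu) Hu.
  + move: (surT y) => [[u hu] Hu].
    have hw : Lw (size (nseq (size u).*2.+1 tt)).
      by rewrite /Lw size_nseq /= odd_double /= uphalf_half odd_double doubleK -unit_seq.
    exists (exist (fun w => Lw (size w)) (nseq (size u).*2.+1 tt) hw); rewrite /Fw /= size_nseq /= odd_double /= uphalf_half odd_double doubleK -unit_seq.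
    have E : fT u = y by rewrite /fT (fdefE _ _ hu) Hu.
    move: hy; rewrite -E => hy; exact: Fo_nt.
-
  apply: natreg_regrel.
  refine (natreg_ext _ (natreg_or (natreg_or (natreg_half false false EG) (natreg_half true true ET))
                        (natreg_or (natreg_half false true (natreg_and (natreg_fst Eg) (natreg_snd Et)))
                                   (natreg_half true false (natreg_and (natreg_fst Et) (natreg_snd Eg)))))).
  move=> p q /=; apply: iff_trans (iff_sym (ex2E _ _ _)).
  rewrite /= !size_nseq /Lw /Fw.
  case Op: (odd p); case Oq: (odd q); rewrite ?tfE ?ftE ?ttE ?ffE ?Fand ?orF ?Fand ?For ?orF.
  + by rewrite Fo_inj.
  + split; first by move=> [[h1 ->] [h2 ->]]; rewrite Fo_t.
    by move=> [h1 [h2 /Fo_inl [-> ->]]]; do !split.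
  + split; first by move=> [[h1 ->] [h2 ->]]; rewrite Fo_t.
    by move=> [h1 [h2 /esym/Fo_inl [-> ->]]]; do !split.
  + split; first by move=> [h1 [h2 ->]].
    by move=> [h1 [h2 [->]]]; do !split.
-
  apply: natreg_regrel.
  refine (natreg_ext _ (natreg_or
    (natreg_or
      (natreg_half false false (natreg_or GG (natreg_and (natreg_fst Eg) (natreg_and (natreg_snd Eg) (natreg_const (eta t t))))))
      (natreg_half true true (natreg_or (natreg_and (natreg_fst Et) (natreg_and (natreg_snd Et) (natreg_const (gamma g g)))) GT)))
    (natreg_or
      (natreg_half false true (natreg_or (natreg_and (natreg_fst GGc) (natreg_snd Et)) (natreg_and (natreg_fst Eg) (natreg_snd GTc'))))
      (natreg_half true false (natreg_or (natreg_and (natreg_fst Et) (natreg_snd GGc')) (natreg_and (natreg_fst GTc) (natreg_snd Eg))))))).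
  move=> p q /=; apply: iff_trans (iff_sym (ex2E _ _ _)).
  rewrite /= !size_nseq /Lw /Fw.
  case Op: (odd p); case Oq: (odd q); rewrite ?tfE ?ftE ?ttE ?ffE ?Fand ?orF ?Fand ?For ?orF.
  all: case: (excluded_middle_informative (fT (nseq p./2 tt) = t)) => Ha;
    case: (excluded_middle_informative (fT (nseq q./2 tt) = t)) => Hb;
    rewrite ?Ha ?Hb ?Fo_t ?(Fo_nt _ Ha) ?(Fo_nt _ Hb) /=.
  all: intuition auto.
Qed.
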